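(* Let $(E\to M,\rho,\langle\cdot,\cdot\rangle,\circ)$ be a Courant algebroid and $(\mathbf I,\mathbf J,\mathbf K)$ an almost hypercomplex structure on $E$. Then each of the following formulas defines a hypercomplex connection: $$\nabla_XY=-\tfrac12\mathbf K\big(\mathbf JY\circ\mathbf IX-\mathbf J(Y\circ\mathbf IX)-\mathbf I(\mathbf JY\circ X)+\mathbf J\mathbf I(Y\circ X)\big),$$ $$\nabla'_XY=-\tfrac12\mathbf I\big(\mathbf KY\circ\mathbf JX-\mathbf K(Y\circ\mathbf JX)-\mathbf J(\mathbf KY\circ X)+\mathbf K\mathbf J(Y\circ X)\big),$$ $$\nabla''_XY=-\tfrac12\mathbf J\big(\mathbf IY\circ\mathbf KX-\mathbf I(Y\circ\mathbf KX)-\mathbf K(\mathbf IY\circ X)+\mathbf I\mathbf K(Y\circ X)\big),$$ for $X,Y\in\Gamma(E)$.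
   Context: A Courant algebroid $(E\to M,\rho,\langle\cdot,\cdot\rangle,\circ)$ consists of a real vector bundle $E\to M$ over a smooth manifold, a nondegenerate symmetric fiberwise bilinear pairing $\langle\cdot,\cdot\rangle$ on $E$, a vector bundle map $\rho:E\to TM$ (the anchor), and an $\mathbb R$-bilinear operation $\circ$ on $\Gamma(E)$ (the Dorfman bracket) such that for all $f\in C^\infty(M)$, $x,y,z\in\Gamma(E)$: $x\circ(y\circ z)=(x\circ y)\circ z+y\circ(x\circ z)$; $\rho(x\circ y)=[\rho(x),\rho(y)]$; $x\circ(fy)=(\rho(x)f)y+f(x\circ y)$; $x\circ y+y\circ x=2D\langle x,y\rangle$; $(Df)\circ x=0$; $\rho(x)\langle y,z\rangle=\langle x\circ y,z\rangle+\langle y,x\circ z\rangle$. Here $D:C^\infty(M)\to\Gamma(E)$ is the $\mathbb R$-linear map defined by $\langle Df,x\rangle=\tfrac12\rho(x)f$. An almost hypercomplex structure on $E$ is a triple $(\mathbf I,\mathbf J,\mathbf K)$ of vector bundle endomorphisms of $E$ over $\mathrm{id}_M$, each orthogonal for $\langle\cdot,\cdot\rangle$, with $\mathbf I^2=\mathbf J^2=\mathbf K^2=\mathbf I\mathbf J\mathbf K=-1$. Given an almost hypercomplex structure, for $f\in C^\infty(M)$ and $X,Y\in\Gamma(E)$ set $\Delta_f(X,Y)=\langle X,Y\rangle Df+\langle\mathbf IX,Y\rangle\mathbf I Df+\langle\mathbf JX,Y\rangle\mathbf JDf+\langle\mathbf KX,Y\rangle\mathbf KDf$. A hypercomplex connection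 is an $\mathbb R$-bilinear map $\Gamma(E)\times\Gamma(E)\to\Gamma(E)$, $(X,Y)\mapsto\nabla_XY$, with $\nabla_{fX}Y=f\nabla_XY$ and $\nabla_X(fY)=(\rho(X)f)Y+f\nabla_XY-\Delta_f(X,Y)$ for all $f\in C^\infty(M)$, $X,Y\in\Gamma(E)$. *)

(* Defs.v *)
(* Algebraic model of a Courant algebroid:
   R      : the real scalars (a real field),
   A      : the commutative R-algebra C^oo(M),
   S      : the A-module Gamma(E) of sections,
   rho    : anchor, x |-> (vector field rho(x) acting on functions),
   pair   : the C^oo(M)-valued pairing on sections,
   dorf   : the Dorfman bracket,
   D      : the operator C^oo(M) -> Gamma(E) defined by <Df,x> = 1/2 rho(x) f. *)
From HB Require Import structures.
From mathcomp Require Import all_boot all_order all_algebra.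
Set Implicit Arguments. Unset Strict Implicit. Unset Printing Implicit Defensive.
Import Order.TTheory GRing.Theory Num.Theory.
Local Open Scope ring_scope.

Definition rsc (R : realFieldType) (A : comAlgType R) (S : lmodType A)
  (c : R) (v : S) : S := (c%:A : A) *: v.

Definition is_anchor (R : realFieldType) (A : comAlgType R) (S : lmodType A)
  (rho : S -> A -> A) : Prop :=
  [/\ (forall (a : A) (x y : S) (f : A), rho (a *: x + y) f = a * rho x f + rho y f),
      (forall (x : S) (f g : A), rho x (f + g) = rho x f + rho x g),
      (forall (x : S) (c : R) (f : A), rho x (c *: f) = c *: rho x f) &
      (forall (x : S) (f g : A), rho x (f * g) = rho x f * g + f * rho x g)].

Definition is_pairing (R : realFieldType) (A : comAlgType R) (S : lmodType A)
  (pair : S -> S -> A) : Prop :=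
  [/\ (forall x y : S, pair x y = pair y x),
      (forall (a : A) (x y z : S), pair (a *: x + y) z = a * pair x z + pair y z) &
      (forall x : S, (forall y : S, pair x y = 0) -> x = 0)].

Definition is_D (R : realFieldType) (A : comAlgType R) (S : lmodType A)
  (rho : S -> A -> A) (pair : S -> S -> A) (D : A -> S) : Prop :=
  forall (f : A) (x : S), pair (D f) x = (2%:R^-1 : R) *: rho x f.

Definition is_courant (R : realFieldType) (A : comAlgType R) (S : lmodType A)
  (rho : S -> A -> A) (pair : S -> S -> A) (dorf : S -> S -> S) (D : A -> S) : Prop :=
  [/\ is_anchor rho, is_pairing pair, is_D rho pair D,
      [/\ (forall x y z : S, dorf (x + y) z = dorf x z + dorf y z),
          (forall x y z : S, dorf x (y + z) = dorf x y + dorf x z),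
          (forall (c : R) (x y : S), dorf (rsc c x) y = rsc c (dorf x y)) &
          (forall (c : R) (x y : S), dorf x (rsc c y) = rsc c (dorf x y))] &
      [/\ (forall x y z : S, dorf x (dorf y z) = dorf (dorf x y) z + dorf y (dorf x z)),
          (forall (x y : S) (f : A), rho (dorf x y) f = rho x (rho y f) - rho y (rho x f)),
          (forall (x y : S) (f : A), dorf x (f *: y) = rho x f *: y + f *: dorf x y),
          (forall x y : S, dorf x y + dorf y x = (D (pair x y)) *+ 2) &
          (forall (f : A) (x : S), dorf (D f) x = 0)] /\
      (forall x y z : S, rho x (pair y z) = pair (dorf x y) z + pair y (dorf x z))].

(* vector bundle endomorphism over id_M = A-linear map on sections *)
Definition is_bundle_endo (A : pzRingType) (S : lmodType A) (T : S -> S) : Prop :=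
  forall (a : A) (x y : S), T (a *: x + y) = a *: T x + T y.

Definition is_almost_hypercomplex (R : realFieldType) (A : comAlgType R) (S : lmodType A)
  (pair : S -> S -> A) (I J K : S -> S) : Prop :=
  [/\ is_bundle_endo I, is_bundle_endo J, is_bundle_endo K,
      (forall x y : S, [/\ pair (I x) (I y) = pair x y,
                           pair (J x) (J y) = pair x y &
                           pair (K x) (K y) = pair x y]) &
      (forall x : S, [/\ I (I x) = - x, J (J x) = - x, K (K x) = - x &
                         I (J (K x)) = - x])].

Definition Delta (R : realFieldType) (A : comAlgType R) (S : lmodType A)
  (pair : S -> S -> A) (D : A -> S) (I J K : S -> S) (f : A) (X Y : S) : S :=
  pair X Y *: D f + pair (I X) Y *: I (D f) + pair (J X) Y *: J (D f)
  + pair (K X) Y *: K (D f).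

Definition is_hypercomplex_connection (R : realFieldType) (A : comAlgType R)
  (S : lmodType A) (rho : S -> A -> A) (pair : S -> S -> A) (D : A -> S)
  (I J K : S -> S) (nabla : S -> S -> S) : Prop :=
  [/\
      [/\ (forall X Y Z : S, nabla (X + Y) Z = nabla X Z + nabla Y Z),
          (forall X Y Z : S, nabla X (Y + Z) = nabla X Y + nabla X Z),
          (forall (c : R) (X Y : S), nabla (rsc c X) Y = rsc c (nabla X Y)) &
          (forall (c : R) (X Y : S), nabla X (rsc c Y) = rsc c (nabla X Y))],
      (forall (f : A) (X Y : S), nabla (f *: X) Y = f *: nabla X Y) &
      (forall (f : A) (X Y : S),
          nabla X (f *: Y) = rho X f *: Y + f *: nabla X Y - Delta pair D I J K f X Y)].

(* Main.v *)
Require Import Defs.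
From HB Require Import structures.
From mathcomp Require Import all_boot all_order all_algebra.
Import Order.TTheory GRing.Theory Num.Theory.
Set Implicit Arguments. Unset Strict Implicit.
Local Open Scope ring_scope.

Section Aux.
Lemma endoD (A : pzRingType) (S : lmodType A) (T : S -> S) :
  is_bundle_endo T -> forall x y, T (x + y) = T x + T y.
Proof. by move=> h x y; have := h 1 x y; rewrite !scale1r. Qed.

Lemma endo0 (A : pzRingType) (S : lmodType A) (T : S -> S) :
  is_bundle_endo T -> T 0 = 0.
Proof.
move=> h; have := endoD h 0 0; rewrite addr0.
by move/(congr1 (fun v => v - T 0)); rewrite subrr addrK => <-.
Qed.

Lemma endoZ (A : pzRingType) (S : lmodType A) (T : S -> S) :
  is_bundle_endo T -> forall a x, T (a *: x) = a *: T x.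
Proof. by move=> h a x; have := h a x 0; rewrite !addr0 endo0 // addr0. Qed.

Lemma endoN (A : pzRingType) (S : lmodType A) (T : S -> S) :
  is_bundle_endo T -> forall x, T (- x) = - T x.
Proof. by move=> h x; rewrite -scaleN1r endoZ // scaleN1r. Qed.

Lemma endoMn (A : pzRingType) (S : lmodType A) (T : S -> S) :
  is_bundle_endo T -> forall x n, T (x *+ n) = T x *+ n.
Proof.
move=> h x; elim=> [|n IH]; first by rewrite !mulr0n endo0.
by rewrite !mulrS endoD // IH.
Qed.

Lemma endo_rsc (R : realFieldType) (A : comAlgType R) (S : lmodType A) (T : S -> S) :
  is_bundle_endo T -> forall c x, T (rsc c x) = rsc c (T x).
Proof. by move=> h c x; rewrite /rsc endoZ. Qed.
End Aux.

Lemma quat (R : realFieldType) (A : comAlgType R) (S : lmodType A)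
  (pair : S -> S -> A) (I J K : S -> S) :
  is_almost_hypercomplex pair I J K ->
  forall x, [/\ I (J x) = K x, J (I x) = - K x & J (K x) = I x] /\
               [/\ K (J x) = - I x, K (I x) = J x & I (K x) = - J x].
Proof.
case=> hI hJ hK _ hsq.
have II x : I (I x) = - x by case: (hsq x).
have JJ x : J (J x) = - x by case: (hsq x).
have KK x : K (K x) = - x by case: (hsq x).
have IJK x : I (J (K x)) = - x by case: (hsq x).
have IJ x : I (J x) = K x.
  have := IJK (K x); rewrite KK !endoN // => /eqP; rewrite eqr_opp => /eqP //.
have JIJ x : J (I (J x)) = I x.
  have := KK x; rewrite -!IJ => /(congr1 I); rewrite II endoN // => /eqP.
  by rewrite eqr_opp => /eqP.
have JI x : J (I x) = - K x.
  by have := JIJ (J x); rewrite JJ endoN // endoN // IJ => <-; rewrite opprK.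
have JK x : J (K x) = I x by rewrite -IJ JIJ.
have IK x : I (K x) = - J x by rewrite -IJ II.
have KJ x : K (J x) = - I x by rewrite -IJ JJ endoN.
have KI x : K (I x) = J x by rewrite -IJ JI endoN // IK opprK.
by move=> x; split; split.
Qed.


Lemma cyc (R : realFieldType) (A : comAlgType R) (S : lmodType A)
  (pair : S -> S -> A) (I J K : S -> S) :
  is_almost_hypercomplex pair I J K -> is_almost_hypercomplex pair J K I.
Proof.
move=> hH; have Q := quat hH; case: hH => hI hJ hK hp hsq; split => //.
- by move=> x y; case: (hp x y) => *; split.
- move=> x; case: (hsq x) => *; split => //.
  by case: (Q (I x)) => [[_ _ ->]] _.
Qed.

Lemma pairD1 (R : realFieldType) (A : comAlgType R) (S : lmodType A)
  (pair : S -> S -> A) : is_pairing pair ->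
  [/\ forall x y z, pair (x + y) z = pair x z + pair y z,
      forall a x z, pair (a *: x) z = a * pair x z,
      forall x z, pair (- x) z = - pair x z,
      forall x y z, pair z (x + y) = pair z x + pair z y &
      forall a x z, pair z (a *: x) = a * pair z x].
Proof.
case=> hs hl _.
have hD x y z : pair (x + y) z = pair x z + pair y z.
  by have := hl 1 x y z; rewrite scale1r mul1r.
have h0 z : pair 0 z = 0.
  have := hD 0 0 z; rewrite addr0.
  by move/(congr1 (fun v => v - pair 0 z)); rewrite subrr addrK => <-.
have hZ a x z : pair (a *: x) z = a * pair x z.
  by have := hl a x 0 z; rewrite !addr0 h0 addr0.
split => //.
- by move=> x z; rewrite -scaleN1r hZ mulN1r.
- by move=> x y z; rewrite hs hD -!(hs z).
- by move=> a x z; rewrite hs hZ hs.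
Qed.

Lemma DM (R : realFieldType) (A : comAlgType R) (S : lmodType A)
  (rho : S -> A -> A) (pair : S -> S -> A) (D : A -> S) :
  is_anchor rho -> is_pairing pair -> is_D rho pair D ->
  forall f g, D (f * g) = f *: D g + g *: D f.
Proof.
move=> hr hp hd f g; have [hD hZ hN _ _] := pairD1 hp.
case: hp => _ _ hnd; case: hr => _ _ _ hL.
apply/eqP; rewrite -subr_eq0; apply/eqP; apply: hnd => y.
rewrite hD hN hD !hZ !hd hL scalerDr -!scalerAr [rho y f * g]mulrC.
by rewrite (addrC (_ *: (g * _))) subrr.
Qed.

Lemma G1 (V : zmodType) (u w r d : V) : (u + w) - (r + (u - d)) = d + (- r + w).
Proof. by rewrite opprD opprB !addrA (ACl (1*5*4*3*2)) /= subrr add0r. Qed.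

Lemma dorfZl (R : realFieldType) (A : comAlgType R) (S : lmodType A)
  (rho : S -> A -> A) (pair : S -> S -> A) (dorf : S -> S -> S) (D : A -> S) :
  is_courant rho pair dorf D ->
  forall f y z, dorf (f *: y) z =
     f *: dorf y z + (- (rho z f *: y) + (pair y z *: D f) *+ 2).
Proof.
case=> hr hp hd _ [[_ _ hLe hs _] _] f y z.
have sw a b : dorf a b = D (pair a b) *+ 2 - dorf b a by rewrite -hs addrK.
have [hD hZ hN _ _] := pairD1 hp.
rewrite sw hZ (DM hr hp hd) hLe (sw z y).
have -> : pair z y = pair y z by case: hp.
by rewrite scalerBr -scalerMnr mulrnDl G1.
Qed.

Lemma G2 (V : zmodType) (a1 a2 b1 b2 c1 c2 d1 d2 : V) :
  (a1 + a2) - (b1 + b2) - (c1 + c2) + (d1 + d2) =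
  (a1 - b1 - c1 + d1) + (a2 - b2 - c2 + d2).
Proof.
rewrite !opprD !addrA.
by rewrite (ACl (1*3*5*7*2*4*6*8)).
Qed.

Lemma G3 (V : zmodType) (u k i b j d : V) :
  u + (k + k) - (u + (- i + - i)) - (b + (- j + - j)) + (- b + (d + d)) =
  - ((b - (d + i + j + k)) + (b - (d + i + j + k))).
Proof.
rewrite !opprD !opprK !addrA.
rewrite [LHS](ACl (1*4*7*11*5*8*2*10*12*6*9*3)) /=.
by rewrite subrr sub0r.
Qed.

Lemma half (R : realFieldType) (A : comAlgType R) (S : lmodType A) (v : S) :
  rsc (2%:R^-1 : R) (v + v) = v.
Proof.
have hh : (2%:R^-1 + 2%:R^-1 : R) = 1 by rewrite [RHS](splitr 1) mul1r.
rewrite /rsc scalerDr -scalerDl.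
have -> : (2%:R^-1 : R)%:A + (2%:R^-1 : R)%:A = 1 :> A by rewrite -scalerDl hh scale1r.
by rewrite scale1r.
Qed.

Lemma core (R : realFieldType) (A : comAlgType R) (S : lmodType A)
  (rho : S -> A -> A) (pair : S -> S -> A) (dorf : S -> S -> S) (D : A -> S)
  (I J K : S -> S)
  (hC : is_courant rho pair dorf D)
  (hH : is_almost_hypercomplex pair I J K) :
  forall (f : A) (X Y : S),
  - rsc (2%:R^-1 : R) (K (
      (- (rho (I X) f *: J Y) + (pair (J Y) (I X) *: D f) *+ 2)
    - J (- (rho (I X) f *: Y) + (pair Y (I X) *: D f) *+ 2)
    - I (- (rho X f *: J Y) + (pair (J Y) X *: D f) *+ 2)
    + J (I (- (rho X f *: Y) + (pair Y X *: D f) *+ 2))))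
  = rho X f *: Y - Delta pair D I J K f X Y.
Proof.
move=> f X Y.
have Q := quat hH; case: (hH) => hI hJ hK hp hsq.
have II x : I (I x) = - x by case: (hsq x).
have JJ x : J (J x) = - x by case: (hsq x).
have KK x : K (K x) = - x by case: (hsq x).
have IJ x : I (J x) = K x by case: (Q x) => [[]].
have JI x : J (I x) = - K x by case: (Q x) => [[]].
have JK x : J (K x) = I x by case: (Q x) => [[]].
have KJ x : K (J x) = - I x by case: (Q x) => [_ []].
have KI x : K (I x) = J x by case: (Q x) => [_ []].
have IK x : I (K x) = - J x by case: (Q x) => [_ []].
case: (hC) => _ hpp _ _ _.
have [hD hZ hN hD2 hZ2] := pairD1 hpp.
have sym x y : pair x y = pair y x by case: hpp.
have hN2 x z : pair z (- x) = - pair z x by rewrite sym hN sym.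
have e1 : pair (J Y) (I X) = pair (K X) Y.
  have [h1 _ _] := hp (J Y) (I X); have [_ _ h3] := hp (K Y) X.
  by rewrite -h1 IJ II hN2 -h3 KK hN opprK sym.
have e2 : pair (J Y) X = - pair (J X) Y.
  have [_ h2 _] := hp (J Y) X.
  by rewrite -h2 JJ hN sym.
rewrite e1 (sym Y) e2 (sym Y X).
do 3 rewrite ?(endoD hI) ?(endoD hJ) ?(endoD hK) ?(endoN hI) ?(endoN hJ) ?(endoN hK)
  ?(endoZ hI) ?(endoZ hJ) ?(endoZ hK) ?(endoMn hI) ?(endoMn hJ) ?(endoMn hK)
  ?II ?JJ ?KK ?IJ ?JI ?JK ?KJ ?KI ?IK.
rewrite /Delta ?scalerN ?scaleNr ?opprK G3.
by rewrite /rsc scalerN opprK -/(rsc _ _) half.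
Qed.

Lemma G4 (A : comPzRingType) (S : lmodType A) (a : A) (x y z w : S) :
  a *: x - a *: y - a *: z + a *: w = a *: (x - y - z + w).
Proof. by rewrite scalerDr !scalerBr. Qed.

Lemma G5 (A : comPzRingType) (S : lmodType A) (a b : A) (w : S) :
  - (b *: (a *: w)) = a *: - (b *: w).
Proof. by rewrite scalerA mulrC -scalerA scalerN. Qed.

Lemma G6 (V : zmodType) (p q a b c d : V) :
  (p + a) - (q + b) - (p + c) + (q + d) = a - b - c + d.
Proof.
rewrite !opprD !addrA [LHS](ACl (1*5*7*3*2*4*6*8)) /=.
by rewrite subrr add0r subrr add0r.
Qed.

Lemma rscD (R : realFieldType) (A : comAlgType R) (S : lmodType A) c (x y : S) :
  rsc c (x + y) = rsc c x + rsc c y.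
Proof. by rewrite /rsc scalerDr. Qed.

Lemma rscZ (R : realFieldType) (A : comAlgType R) (S : lmodType A) c f (x : S) :
  rsc c (f *: x) = f *: rsc c x.
Proof. by rewrite /rsc !scalerA mulrC. Qed.

Lemma conn (R : realFieldType) (A : comAlgType R) (S : lmodType A)
  (rho : S -> A -> A) (pair : S -> S -> A) (dorf : S -> S -> S) (D : A -> S)
  (I J K : S -> S)
  (hC : is_courant rho pair dorf D)
  (hH : is_almost_hypercomplex pair I J K) :
  is_hypercomplex_connection rho pair D I J K
        (fun X Y => - rsc (2%:R^-1 : R)
           (K (dorf (J Y) (I X) - J (dorf Y (I X)) - I (dorf (J Y) X) + J (I (dorf Y X))))).
Proof.
have hC' := hC.
case: hC' => hr hp hd [hd1 hd2 hr1 hr2] [[_ _ hLe _ _] _].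
case: (hH) => hI hJ hK _ _.
split; first split.
- move=> X Y Z; do 3 rewrite ?(endoD hI) ?hd2 ?(endoD hJ); rewrite G2 [in LHS](endoD hK).
  by rewrite /rsc scalerDr opprD.
- move=> X Y Z; do 3 rewrite ?(endoD hI) ?hd1 ?(endoD hJ); rewrite G2 [in LHS](endoD hK).
  by rewrite /rsc scalerDr opprD.
- move=> c X Y; do 3 rewrite ?(endo_rsc hI) ?hr2 ?(endo_rsc hJ).
  by rewrite /rsc G4 (endoZ hK) G5.
- move=> c X Y; do 3 rewrite ?(endo_rsc hI) ?hr1 ?(endo_rsc hJ).
  by rewrite /rsc G4 (endoZ hK) G5.
- move=> f X Y; rewrite !(endoZ hI) !hLe.
  do 3 rewrite ?(endoD hI) ?(endoZ hI) ?(endoD hJ) ?(endoZ hJ); rewrite G6.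
  by rewrite /rsc G4 (endoZ hK) G5.
- move=> f X Y; rewrite (endoZ hJ f Y) !(dorfZl hC).
  rewrite (endoD hJ (f *: _)) (endoZ hJ f) !(endoD hI (f *: _)) !(endoZ hI f).
  rewrite (endoD hJ (f *: _)) (endoZ hJ f) G2 G4 [in LHS](endoD hK) [in LHS](endoZ hK).
  rewrite [in LHS]rscD opprD (core hC hH) rscZ -scalerN.
  by rewrite addrCA addrA.
Qed.

Lemma DeltaC (R : realFieldType) (A : comAlgType R) (S : lmodType A)
  (pair : S -> S -> A) (D : A -> S) (I J K : S -> S) f X Y :
  Delta pair D J K I f X Y = Delta pair D I J K f X Y.
Proof. by rewrite /Delta [LHS](ACl (1*4*2*3)). Qed.

Lemma connC (R : realFieldType) (A : comAlgType R) (S : lmodType A)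
  (rho : S -> A -> A) (pair : S -> S -> A) (D : A -> S) (I J K : S -> S) nab :
  is_hypercomplex_connection rho pair D J K I nab ->
  is_hypercomplex_connection rho pair D I J K nab.
Proof. by case=> h1 h2 h3; split => // f X Y; rewrite h3 DeltaC. Qed.

Theorem mainTheorem3 (R : realFieldType) (A : comAlgType R) (S : lmodType A)
  (rho : S -> A -> A) (pair : S -> S -> A) (dorf : S -> S -> S) (D : A -> S)
  (I J K : S -> S)
  (hC : is_courant rho pair dorf D)
  (hH : is_almost_hypercomplex pair I J K) :
  [/\ is_hypercomplex_connection rho pair D I J K
        (fun X Y => - rsc (2%:R^-1 : R)
           (K (dorf (J Y) (I X) - J (dorf Y (I X)) - I (dorf (J Y) X) + J (I (dorf Y X))))),
      is_hypercomplex_connection rho pair D I J K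
        (fun X Y => - rsc (2%:R^-1 : R)
           (I (dorf (K Y) (J X) - K (dorf Y (J X)) - J (dorf (K Y) X) + K (J (dorf Y X))))) &
      is_hypercomplex_connection rho pair D I J K
        (fun X Y => - rsc (2%:R^-1 : R)
           (J (dorf (I Y) (K X) - I (dorf Y (K X)) - K (dorf (I Y) X) + I (K (dorf Y X)))))].
Proof.
split.
- exact: conn.
- exact: connC (conn hC (cyc hH)).
- exact: connC (connC (conn hC (cyc (cyc hH)))).
Qed.
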